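(* Let $E$ be a (real, Hausdorff) locally convex space and let $B\subseteq E$ be a bounded subset. Then $B$ is tame in $E$ if and only if $B$ contains no bounded $l^1$-sequence. Consequently, a locally convex space $E$ is tame if and only if $E$ contains no bounded $l^1$-sequence.
   Context: For a locally convex space $E$, $E^*$ denotes its topological dual and ${\rm eqc}(E^* )$ the family of all equicontinuous, weak-star compact subsets of $E^*$. A sequence of real functions $(f_n)_{n\in\mathbb N}$ on a set $X$ is independent if there are reals $a<b$ such that $\bigcap_{n\in P} f_n^{-1}(-\infty,a)\cap\bigcap_{n\in M} f_n^{-1}(b,\infty)\neq\emptyset$ for all finite disjoint $P,M\subseteq\mathbb N$. A bounded family of real functions on $X$ is tame if it contains no independent sequence. A bounded subset $B\subseteq E$ is tame (in $E$) if for every $K\in{\rm eqc}(E^* )$ the family of functions $\{K\to\mathbb R,\ \varphi\mapsto\varphi(b)\}_{b\in B}$ is a tame family on $K$. $E$ is tame if every bounded subset of $E$ is tame. A bounded sequence $(x_n)$ in $E$ is an $l^1$-sequence (equivalent to the $l^1$-basis) if there exist a continuous seminorm $\rho$ on $E$ and $\delta>0$ such that $\delta\sum_{i=1}^n|c_i|\le\rho(\sum_{i=1}^n c_ix_i)$ for all $n$ and all reals $c_1,\dots,c_n$. *)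

(* Defs.v *)
From HB Require Import structures.
From mathcomp Require Import all_boot all_order all_algebra.
From mathcomp Require Import all_classical all_reals all_analysis.
Set Implicit Arguments. Unset Strict Implicit. Unset Printing Implicit Defensive.
Import Order.TTheory GRing.Theory Num.Theory.
Import numFieldNormedType.Exports.
Local Open Scope classical_set_scope.
Local Open Scope ring_scope.

Section Tame.
Context {R : realType} {E : tvsType R}.

Definition tvs_bounded (B : set E) : Prop :=
  forall U : set E, nbhs (0 : E) U ->
    exists2 s : R, 0 < s & forall t : R, s < t -> B `<=` [set t *: u | u in U].

Definition dual_space : set (E -> R) :=
  [set phi | (forall (a : R) (x y : E), phi (a *: x + y) = a * phi x + phi y)
             /\ continuous phi].

(** The weak-star topology on E^star is the topology of pointwise convergence,
    i.e. the subspace topology of the product topology {ptws E -> R}. *)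
Definition eqc (K : set (E -> R)) : Prop :=
  K `<=` dual_space /\
  equicontinuous K (fun phi : E -> R => phi) /\
  compact (K : set {ptws E -> R}).

Definition independent_seq {T : Type} (X : set T) (f : nat -> T -> R) : Prop :=
  exists a b : R, a < b /\
    forall P M : seq nat, (forall n, n \in P -> n \notin M) ->
      exists2 x, X x &
        (forall n, n \in P -> f n x < a) /\ (forall n, n \in M -> b < f n x).

Definition tame_family {T : Type} (X : set T) (F : set (T -> R)) : Prop :=
  (exists M : R, forall f, F f -> forall x, X x -> `|f x| <= M) /\
  ~ (exists f : nat -> T -> R, (forall n, F (f n)) /\ independent_seq X f).

Definition tame_set (B : set E) : Prop :=
  tvs_bounded B /\
  forall K : set (E -> R), eqc K ->
    tame_family K [set (fun phi : E -> R => phi b) | b in B].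

Definition tame_space : Prop := forall B : set E, tvs_bounded B -> tame_set B.

Definition continuous_seminorm (rho : E -> R) : Prop :=
  (forall x y : E, rho (x + y) <= rho x + rho y) /\
  (forall (t : R) (x : E), rho (t *: x) = `|t| * rho x) /\
  continuous rho.

(** Bounded l^1-sequence (equivalent to the l^1-basis). *)
Definition l1_sequence (x : nat -> E) : Prop :=
  tvs_bounded (range x) /\
  exists rho : E -> R, continuous_seminorm rho /\
    exists2 delta : R, 0 < delta &
      forall (n : nat) (c : nat -> R),
        delta * (\sum_(i < n) `|c i|) <= rho (\sum_(i < n) c i *: x i).

End Tame.

(* Main.v *)
Require Import Defs.
From HB Require Import structures.
From mathcomp Require Import all_boot all_order all_algebra.
From mathcomp Require Import all_classical all_reals all_analysis.
From mathcomp Require Import ring lra.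
Set Implicit Arguments. Unset Strict Implicit. Unset Printing Implicit Defensive.
Import Order.TTheory GRing.Theory Num.Theory.
Import numFieldNormedType.Exports.
Local Open Scope classical_set_scope.
Local Open Scope ring_scope.

Section Aux.
Context {R : realType} {E : tvsType R}.

Lemma sn0 (rho : E -> R) : continuous_seminorm rho -> rho 0 = 0.
Proof. by case=> _ [hZ _]; rewrite -(scale0r (0:E)) hZ normr0 mul0r. Qed.

Lemma sn_ge0 (rho : E -> R) : continuous_seminorm rho -> forall x, 0 <= rho x.
Proof.
move=> hr x; have [hD [hZ _]] := hr.
have := hD x (- x); rewrite subrr sn0 // -scaleN1r hZ normrN normr1 mul1r.
by move=> h; lra.
Qed.

Lemma subl_cont (x : E) : (fun y : E => x - y) @ x --> x - x.
Proof.
apply: (@continuous_comp _ _ _ (fun y : E => (x, y)) (fun z : E * E => z.1 - z.2)).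
  by apply: cvg_pair => /=; [exact: cvg_cst|exact: cvg_id].
exact: sub_continuous.
Qed.

Lemma sn_near (rho : E -> R) : continuous_seminorm rho ->
  forall x e, 0 < e -> \forall y \near x, rho (x - y) < e.
Proof.
move=> hr x e e0; have [_ [_ hc]] := hr.
have : (fun y => rho (x - y)) @ x --> rho (x - x).
  apply: continuous_comp; first exact: subl_cont. exact: hc.
rewrite subrr sn0 // => /cvgrPdist_lt /(_ e e0).
apply: filterS => y; rewrite sub0r normrN => h.
by apply: le_lt_trans h; exact: ler_norm.
Qed.


Definition lin (phi : E -> R) := forall (a : R) (x y : E), phi (a *: x + y) = a * phi x + phi y.

Lemma lin0 phi : lin phi -> phi 0 = 0.
Proof. move=> h; have := h 1 0 0; rewrite scale1r addr0 mul1r => h0; lra. Qed.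

Lemma linB phi : lin phi -> forall x y, phi (x - y) = phi x - phi y.
Proof. move=> h x y; rewrite -scaleN1r addrC h; ring. Qed.

Lemma linD phi : lin phi -> forall x y, phi (x + y) = phi x + phi y.
Proof. move=> h x y; rewrite -[x]scale1r h scale1r mul1r //. Qed.

Lemma linZ phi : lin phi -> forall a x, phi (a *: x) = a * phi x.
Proof. move=> h a x; by rewrite -[a *: x]addr0 h lin0 // addr0. Qed.

Lemma closure_sub (T : topologicalType) (A C : set T) : A `<=` C -> closed C -> closure A `<=` C.
Proof. by move=> AC cC x /(closureS AC) /cC. Qed.

Definition polar (rho : E -> R) (d : R) : set (E -> R) :=
  [set phi | lin phi /\ forall x, `|phi x| <= rho x / d].

Lemma polar_near rho d : continuous_seminorm rho -> 0 < d ->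
  forall x e, 0 < e -> \forall y \near x, forall phi, polar rho d phi -> `|phi x - phi y| < e.
Proof.
move=> hr d0 x e e0; have := sn_near hr x (mulr_gt0 e0 d0).
apply: filterS => y hy phi [hl hb]; rewrite -linB //.
apply: le_lt_trans (hb _) _; rewrite ltr_pdivrMr //.
Qed.


Lemma proj_cont (u : E) : continuous (fun g : {ptws E -> R} => g u).
Proof. exact: (@proj_continuous E (fun _ => R) u). Qed.

Lemma polar_closed rho d : closed (polar rho d : set {ptws E -> R}).
Proof.
move=> f clf; split.
  move=> a x y.
  pose G := fun g : {ptws E -> R} => g (a *: x + y) - a * g x - g y.
  suff : G f = 0 by rewrite /G => h; lra.
  have : closure (polar rho d : set {ptws E -> R}) `<=` G @^-1` [set r | r = 0].
    apply: closure_sub.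
      by move=> g [hl _]; rewrite /G /= hl; ring.
    apply: preimage_closed; last exact: closed_eq.
    move=> g _.
    have h1 := @proj_cont (a *: x + y) g.
    have h2 := @proj_cont x g.
    have h3 := @proj_cont y g.
    have h4 : (fun g0 : {ptws E -> R} => a * g0 x) @ g --> a * g x := cvgMl_tmp (FF:=nbhs_filter g) (a:=a) h2.
    have h5 := cvgB (FF:=nbhs_filter g) h1 h4.
    exact: (cvgB (FF:=nbhs_filter g) h5 h3).
  by move=> /(_ f clf).
move=> x.
have : closure (polar rho d : set {ptws E -> R}) `<=`
    (fun g : {ptws E -> R} => g x) @^-1` `[- (rho x / d), rho x / d].
  apply: closure_sub.
    move=> g [_ hb] /=; rewrite in_itv /= -ler_norml; exact: hb.
  apply: preimage_closed; last exact: itv_closed.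
  move=> g _; exact: proj_cont.
by move=> /(_ f clf); rewrite /= in_itv /= -ler_norml.
Qed.


Lemma polar_eqc rho d : continuous_seminorm rho -> 0 < d -> eqc (polar rho d).
Proof.
move=> hr d0; split; [|split].
- move=> phi [hl hb]; split; first exact: hl.
  move=> x; apply/cvgrPdist_lt => e e0.
  by apply: filterS (polar_near hr d0 x e0) => y /(_ phi (conj hl hb)).
- move=> x A; rewrite -entourage_from_ballE => -[e /= e0 sub].
  apply: filterS (polar_near hr d0 x e0) => y hy phi Kphi.
  apply: sub; rewrite /= -ball_normE /=; exact: hy.
- have Hc : compact [set f : {ptws E -> R} | forall i, `[- (rho i / d), rho i / d]%classic (f i)].
    exact: (@tychonoff E (fun _ => R) (fun i => `[- (rho i / d), rho i / d]%classic) (fun i => @segment_compact R _ _)).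
  apply: (subclosed_compact _ Hc).
  + exact: polar_closed.
  + move=> g [_ hb] i /=; rewrite in_itv /= -ler_norml; exact: hb.
Qed.

End Aux.

Section HBsec.
Context {R : realType} {E : lmodType R}.
Variable p : E -> R.
Hypothesis pD : forall x y, p (x + y) <= p x + p y.
Hypothesis pZ : forall (t : R) x, p (t *: x) = `|t| * p x.

Definition good (G : set (E * R)) :=
  [/\ G (0, 0),
      (forall a x r y s, G (x, r) -> G (y, s) -> G (a *: x + y, a * r + s)) &
      (forall x r, G (x, r) -> r <= p x)].

Lemma p0 : p 0 = 0.
Proof. by rewrite -(scale0r (0:E)) pZ normr0 mul0r. Qed.

Lemma pN x : p (- x) = p x.
Proof. by rewrite -scaleN1r pZ normrN normr1 mul1r. Qed.

Lemma good_fun G : good G -> forall x r s, G (x, r) -> G (x, s) -> r = s.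
Proof.
move=> [G0 GC GD] x r s Gr Gs.
have := GD _ _ (GC (-1) _ _ _ _ Gr Gs); have := GD _ _ (GC (-1) _ _ _ _ Gs Gr).
by rewrite scaleN1r addNr p0 => h1 h2; lra.
Qed.

Lemma good_ext G z : good G -> (forall r, ~ G (z, r)) ->
  exists G', [/\ good G', G `<=` G' & ~ (G' `<=` G)].
Proof.
move=> [G0 GC GD] nz.
pose S := [set u | exists y s, G (y, s) /\ u = s - p (y - z)].
have ubS x r : G (x, r) -> ubound S (p (x + z) - r).
  move=> Gxr _ [y [s [Gys ->]]].
  have := GD _ _ (GC 1 _ _ _ _ Gxr Gys); rewrite scale1r mul1r => h.
  have := pD (x + z) (y - z).
  have -> : x + z + (y - z) = x + y by rewrite addrACA subrr addr0.
  lra.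
have S0 : S !=set0 by exists (0 - p (0 - z)); exists 0, 0.
have hS : has_ubound S by exists (p (0 + z) - 0); exact: ubS.
pose c := sup S.
have cge y s : G (y, s) -> s - p (y - z) <= c.
  by move=> Gys; apply: ub_le_sup => //; exists y, s.
have cle x r : G (x, r) -> c <= p (x + z) - r.
  by move=> Gxr; apply: ge_sup => //; exact: ubS.
pose G' := [set w | exists x r t, G (x, r) /\ w = (x + t *: z, r + t * c)].
exists G'; split.
- split.
  + by exists 0, 0, 0; rewrite scale0r addr0 mul0r addr0.
  + move=> a _ _ _ _ [x1 [r1 [t1 [G1 [-> ->]]]]] [x2 [r2 [t2 [G2 [-> ->]]]]].
    exists (a *: x1 + x2), (a * r1 + r2), (a * t1 + t2); split; first exact: GC.
    congr (_, _).
      by rewrite scalerDr scalerA scalerDl addrACA.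
    ring.
  + move=> _ _ [x [r [t [Gxr [-> ->]]]]].
    have [t0|tn0] := eqVneq t 0.
      by rewrite t0 scale0r addr0 mul0r addr0; exact: GD.
    have [tp|tn] := ltP 0 t.
      have G1 := GC t^-1 _ _ _ _ Gxr G0; rewrite !addr0 in G1.
      have := cle _ _ G1.
      have -> : t^-1 *: x + z = t^-1 *: (x + t *: z).
        by rewrite scalerDr scalerA mulVf // scale1r.
      rewrite pZ ger0_norm; last by rewrite invr_ge0 ltW.
      move=> h.
      have h2 : t * c <= t * (t^-1 * p (x + t *: z) - t^-1 * r) by rewrite ler_pM2l.
      rewrite mulrBr !mulrA mulfV // !mul1r in h2; lra.
    have up : 0 < - t by rewrite oppr_gt0 lt_neqAle tn0 tn.
    have G1 := GC (- t)^-1 _ _ _ _ Gxr G0; rewrite !addr0 in G1.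
    have := cge _ _ G1.
    have -> : (- t)^-1 *: x - z = (- t)^-1 *: (x + t *: z).
      rewrite scalerDr scalerA mulrC invrN mulrN mulfV // scaleN1r //.
    rewrite pZ ger0_norm; last by rewrite invr_ge0 ltW.
      move=> h.
    have h2 : (- t) * ((- t)^-1 * r - (- t)^-1 * p (x + t *: z)) <= (- t) * c by rewrite ler_pM2l.
    rewrite mulrBr !mulrA mulfV ?oppr_eq0 // !mul1r in h2; lra.
- by move=> [x r] Gxr; exists x, r, 0; rewrite scale0r addr0 mul0r addr0.
- move=> /(_ (z, c)) h; apply: (nz c); apply: h.
  by exists 0, 0, 1; rewrite add0r scale1r mul1r add0r.
Qed.

Lemma hahn_banach G0 : good G0 ->
  exists phi : E -> R, [/\ (forall a x y, phi (a *: x + y) = a * phi x + phi y),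
    (forall x, phi x <= p x) & (forall x r, G0 (x, r) -> phi x = r)].
Proof.
move=> gG0.
pose P := [set A : set (E * R) | A = set0 \/ (good A /\ G0 `<=` A)].
have [M [PM Mmax]] : exists A, P A /\ forall B, A `<` B -> ~ P B.
  apply: Zorn_bigcup => F FP Ftot.
  have [[w [A FA Aw]]|n0] := pselect (exists w, (\bigcup_(X in F) X) w); last first.
    left; apply/seteqP; split => // w hw; apply: n0; by exists w.
  have gA B : F B -> forall w, B w -> good B /\ G0 `<=` B.
    move=> FB v Bv; case: (FP _ FB) => [Be|//]; by rewrite Be in Bv.
  right; have [gA' G0A] := gA _ FA _ Aw.
  split; last by move=> v /G0A Av; exists A.
  split.
  - by exists A => //; case: gA'.
  - move=> a x r y s [A1 F1 A1x] [A2 F2 A2y].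
    have [A12|A21] := Ftot _ _ F1 F2.
      exists A2 => //; have [[_ C _] _] := gA _ F2 _ A2y; apply: C => //; exact: A12.
    exists A1 => //; have [[_ C _] _] := gA _ F1 _ A1x; apply: C => //; exact: A21.
  - move=> x r [A1 F1 A1x]; have [[_ _ D] _] := gA _ F1 _ A1x; exact: D.
have [gM G0M] : good M /\ G0 `<=` M.
  case: PM => [M0|//]; exfalso.
  apply: (Mmax G0 _ (or_intror (conj gG0 (@subset_refl _ G0)))).
  rewrite M0; split => // /(_ (0, 0)); case: gG0 => h _ _ /(_ h) //.
have full z : exists r, M (z, r).
  apply: contrapT => nz.
  have [G' [gG' MG' nG']] := good_ext (z := z) gM (fun r h => nz (ex_intro _ r h)).
  apply: (Mmax G'); first by split.
  right; split => //; exact: subset_trans MG'.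
have [phi hphi] := choice full.
case: gM => M0 MC MD.
exists phi; split.
- move=> a x y; apply: (good_fun (And3 M0 MC MD) (hphi _)); exact: MC.
- by move=> x; exact: MD.
- move=> x r /G0M Mxr; exact: (good_fun (And3 M0 MC MD) (hphi _) Mxr).
Qed.

End HBsec.

Lemma sum_widen (V : zmodType) n N (F : nat -> V) : (n <= N)%N ->
  \sum_(i < n) F i = \sum_(i < N) (if (i < n)%N then F i else 0).
Proof. by move=> le; rewrite (big_ord_widen N F le) big_mkcond. Qed.

Section Hard.
Context {R : realType} {E : tvsType R}.

Lemma l1_not_tame (B : set E) (x : nat -> E) :
  (forall n, B (x n)) -> l1_sequence x -> ~ tame_set B.
Proof.
move=> Bx [_ [rho [hr [d d0 hl1]]]] [_ hT].
have [hD [hZ _]] := hr.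
have [_ hno] := hT _ (polar_eqc hr d0).
apply: hno; exists (fun n (phi : E -> R) => phi (x n)); split.
  by move=> n; exists (x n).
exists (-1/2), (1/2); split; first lra.
move=> P M disj.
pose eps i := if i \in P then -1 else if i \in M then 1 else (0:R).
pose G0 := [set w : E * R | exists n (c : nat -> R),
   w = (\sum_(i < n) c i *: x i, \sum_(i < n) c i * eps i)].
pose p := fun v => rho v / d.
have pD : forall u v, p (u + v) <= p u + p v.
  by move=> u v; rewrite /p -mulrDl ler_pM2r ?invr_gt0.
have pZ : forall (t : R) v, p (t *: v) = `|t| * p v.
  by move=> t v; rewrite /p hZ mulrA.
have gG0 : good p G0.
  split.
  - by exists 0%N, (fun _ => 0); rewrite !big_ord0.
  - move=> a _ _ _ _ [n1 [c1 [-> ->]]] [n2 [c2 [-> ->]]].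
    pose N := maxn n1 n2.
    have l1 : (n1 <= N)%N by exact: leq_maxl.
    have l2 : (n2 <= N)%N by exact: leq_maxr.
    exists N, (fun i => a * (if (i < n1)%N then c1 i else 0) + (if (i < n2)%N then c2 i else 0)).
    rewrite (sum_widen (fun i => c1 i *: x i) l1) (sum_widen (fun i => c2 i *: x i) l2) (sum_widen (fun i => c1 i * eps i) l1) (sum_widen (fun i => c2 i * eps i) l2).
    rewrite scaler_sumr mulr_sumr -!big_split /=; congr (_, _); apply: eq_bigr => i _.
      by case: ifP => _; case: ifP => _; rewrite ?(mulr0, add0r, addr0, scale0r, scaler0, scalerDl, scalerA).
    by case: ifP => _; case: ifP => _; ring.
  - move=> _ _ [n [c [-> ->]]].
    have h1 : \sum_(i < n) c i * eps i <= \sum_(i < n) `|c i|.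
      apply: ler_sum => i _; rewrite /eps.
      case: ifP => _; first by rewrite mulrN1 -normrN ler_norm.
      case: ifP => _; first by rewrite mulr1 ler_norm.
      by rewrite mulr0.
    apply: le_trans h1 _; rewrite /p ler_pdivlMr // mulrC; exact: hl1.
have [phi [hl hle hG]] := hahn_banach pD pZ gG0.
have hx n : phi (x n) = eps n.
  apply: hG; exists n.+1, (fun i => if i == n then 1 else 0).
  rewrite !big_ord_recr /= eqxx scale1r mul1r !big1 ?add0r //.
    by move=> i _; rewrite ltn_eqF // mul0r.
  by move=> i _; rewrite ltn_eqF // scale0r.
exists phi.
  split; first exact: hl.
  move=> v; rewrite ler_norml hle andbT.
  have h := hle (- v).
  rewrite -scaleN1r pZ normrN normr1 mul1r (linZ hl) in h.
  rewrite /p in h *; lra.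
split => n hn; rewrite hx /eps.
  by rewrite hn; lra.
have nP : (n \in P) = false.
  by apply/negbTE/negP => /disj; rewrite hn.
by rewrite nP hn; lra.
Qed.

End Hard.

Section Easy.
Context {R : realType} {E : tvsType R}.
Variable K : set (E -> R).
Hypothesis hK : eqc K.

Lemma K_lin phi : K phi -> lin phi.
Proof. by case: hK => Kd _ /Kd []. Qed.

Lemma K_near (x : E) e : 0 < e ->
  \forall y \near x, forall phi, K phi -> `|phi x - phi y| < e.
Proof.
move=> e0; have [_ [Keq _]] := hK.
have := Keq x _ (entourage_ball _ (PosNum e0)); apply: filterS => u h phi Kphi.
by have := h phi Kphi; rewrite /= -ball_normE.
Qed.

Lemma K_near0 : nbhs (0:E) [set u | forall phi, K phi -> `|phi u| < 1].
Proof.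
apply: filterS (K_near 0 ltr01) => u h phi Kphi.
by have := h phi Kphi; rewrite (lin0 (K_lin Kphi)) sub0r normrN.
Qed.

Lemma K_ptbound v : exists m, forall phi, K phi -> `|phi v| <= m.
Proof.
have hc : (fun t : R => t *: v) @ (0:R) --> (0 *: v : E).
  have h1 := @cvg_pair R R^o E (nbhs (0:R)) (nbhs (0:R^o)) (nbhs v) _ _ _ (fun t => t) (fun _ => v) cvg_id (cvg_cst v).
  have {}h1 := h1 (nbhs_filter _) (nbhs_filter _) (nbhs_filter _) (nbhs_filter _).
  have h2 := @scale_continuous R E ((0:R^o), v).
  have h3 : ((fun t : R => ((t:R^o), v)) @ (0:R) --> ((0:R^o), v)) := h1.
  exact: (cvg_comp _ _ h3 h2).
rewrite scale0r in hc.
have := hc _ K_near0; move=> /nbhs_ballP [e /= e0 he].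
have he2 : ball (0:R) e (e / 2).
  by rewrite -ball_normE /= sub0r normrN gtr0_norm ?divr_gt0 // ltr_pdivrMr // ltr_pMr // ltr1n.
have t0 : 0 < e / 2 by rewrite divr_gt0.
exists (e / 2)^-1 => phi Kphi.
have := he _ he2 phi Kphi; rewrite (linZ (K_lin Kphi)) normrM gtr0_norm // => h.
by rewrite -(ler_pM2l t0) mulfV ?gt_eqF //; exact: ltW.
Qed.

Variable phi0 : E -> R.
Hypothesis Kphi0 : K phi0.

Definition rhoK v := sup [set `|phi v| | phi in K].

Lemma rho_ub v phi : K phi -> `|phi v| <= rhoK v.
Proof.
move=> Kphi; apply: ub_le_sup; last by exists phi.
have [m hm] := K_ptbound v; exists m => _ [psi Kpsi <-]; exact: hm.
Qed.

Lemma rho_le v m : (forall phi, K phi -> `|phi v| <= m) -> rhoK v <= m.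
Proof.
move=> h; apply: ge_sup; first by exists `|phi0 v|, phi0.
by move=> _ [psi Kpsi <-]; exact: h.
Qed.

Lemma rho_ge0 v : 0 <= rhoK v.
Proof. exact: le_trans (normr_ge0 _) (rho_ub v Kphi0). Qed.

Lemma rho_sn : continuous_seminorm rhoK.
Proof.
split; [|split].
- move=> x y; apply: rho_le => phi Kphi; rewrite (linD (K_lin Kphi)).
  apply: le_trans (ler_normD _ _) _; apply: lerD; exact: rho_ub.
- move=> t v; apply/eqP; rewrite eq_le; apply/andP; split.
    apply: rho_le => phi Kphi; rewrite (linZ (K_lin Kphi)) normrM.
    by apply: ler_wpM2l => //; exact: rho_ub.
  have [->|t0] := eqVneq t 0; first by rewrite normr0 mul0r rho_ge0.
  rewrite mulrC -ler_pdivlMr ?normr_gt0 //; apply: rho_le => phi Kphi.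
  rewrite ler_pdivlMr ?normr_gt0 // -normrM mulrC -linZ ?rho_ub //; exact: K_lin.
- move=> x; apply/cvgrPdist_lt => e e0.
  apply: filterS (K_near x (divr_gt0 e0 (ltr0n _ 2))) => y h.
  have h1 : rhoK x <= rhoK y + e / 2.
    apply: rho_le => phi Kphi; have := h phi Kphi; have := rho_ub y Kphi.
    have e1 : phi x = phi y + (phi x - phi y) by rewrite addrC subrK.
    have := ler_normD (phi y) (phi x - phi y); rewrite -e1 => h2 h3 h4; lra.
  have h2 : rhoK y <= rhoK x + e / 2.
    apply: rho_le => phi Kphi; have := h phi Kphi; have := rho_ub x Kphi.
    have e1 : phi y = phi x + (phi y - phi x) by rewrite addrC subrK.
    have := ler_normD (phi x) (phi y - phi x); rewrite -e1 distrC => h2 h3 h4; lra.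
  rewrite ltr_norml; apply/andP; split; lra.
Qed.

End Easy.

Section Final.
Context {R : realType} {E : tvsType R}.

Lemma lin_sum (phi : E -> R) : lin phi -> forall n (c : nat -> R) (xs : nat -> E),
  phi (\sum_(i < n) c i *: xs i) = \sum_(i < n) c i * phi (xs i).
Proof.
move=> hl; elim=> [|n IH] c xs; first by rewrite !big_ord0 (lin0 hl).
by rewrite !big_ord_recr /= [in LHS]addrC hl IH addrC.
Qed.

Lemma bounded_K (B : set E) (K : set (E -> R)) : tvs_bounded B -> eqc K ->
  exists M, forall b, B b -> forall phi, K phi -> `|phi b| <= M.
Proof.
move=> hB hK; have [s s0 hs] := hB _ (K_near0 hK).
exists (s + 1) => b Bb phi Kphi.
have st : s < s + 1 by rewrite ltrDl ltr01.
have [u Uu <-] := hs (s + 1) st b Bb.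
rewrite (linZ (K_lin hK Kphi)) normrM gtr0_norm; last by rewrite addr_gt0.
rewrite -[X in _ <= X]mulr1; apply: ler_wpM2l; first by rewrite addr_ge0 // ltW.
exact: ltW (Uu _ Kphi).
Qed.

Lemma no_l1_tame (B : set E) : tvs_bounded B ->
  ~ (exists x : nat -> E, (forall n, B (x n)) /\ l1_sequence x) -> tame_set B.
Proof.
move=> hB nol1; split => // K hK; split.
  have [M hM] := bounded_K hB hK.
  by exists M => _ [b Bb <-] phi Kphi; exact: hM.
move=> [f [Ff [a [b [ab hind]]]]].
have : forall n, exists y, B y /\ (fun phi : E -> R => phi y) = f n.
  by move=> n; case: (Ff n) => y By e; exists y.
move=> /choice [xs hxs].
have fx i phi : f i phi = phi (xs i) by case: (hxs i) => _ <-.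
have [phi0 Kphi0 _] := hind [::] [::] (fun n h => ltac:(by rewrite in_nil in h)).
apply: nol1; exists xs; split; first by move=> n; case: (hxs n).
split.
  move=> U hU; have [s s0 hs] := hB U hU; exists s => // t st _ [n _ <-].
  exact: (hs t st _ (proj1 (hxs n))).
exists (rhoK K); split; first exact: (rho_sn hK Kphi0).
exists ((b - a) / 2); first by rewrite divr_gt0 // subr_gt0.
move=> n c.
pose P1 := [seq i <- iota 0 n | 0 <= c i].
pose M1 := [seq i <- iota 0 n | c i < 0].
have d1 : forall i, i \in M1 -> i \notin P1.
  by move=> i; rewrite !mem_filter => /andP [ci _]; rewrite leNgt ci.
have d2 : forall i, i \in P1 -> i \notin M1.
  by move=> i; rewrite !mem_filter => /andP [ci _]; rewrite ltNge ci.
have [phi1 K1 [h1a h1b]] := hind M1 P1 d1.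
have [phi2 K2 [h2a h2b]] := hind P1 M1 d2.
pose v := \sum_(i < n) c i *: xs i.
have key : (b - a) * \sum_(i < n) `|c i| <= phi1 v - phi2 v.
  rewrite /v (lin_sum (K_lin hK K1)) (lin_sum (K_lin hK K2)).
  rewrite -sumrB mulr_sumr; apply: ler_sum => i _.
  have iin : (i : nat) \in iota 0 n by rewrite mem_iota /= add0n ltn_ord.
  have [ci|ci] := lerP 0 (c i).
    have := h1b i; have := h2a i; rewrite !fx mem_filter ci iin => /(_ isT) u1 /(_ isT) u2.
    rewrite ger0_norm //; nra.
  have := h1a i; have := h2b i; rewrite !fx mem_filter ci iin => /(_ isT) u1 /(_ isT) u2.
  rewrite ltr0_norm //; nra.
have r1 : phi1 v <= rhoK K v.
  by apply: le_trans (ler_norm _) _; exact: (rho_ub hK _ K1).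
have r2 : - phi2 v <= rhoK K v.
  by apply: le_trans (ler_norm _) _; rewrite normrN; exact: (rho_ub hK _ K2).
rewrite mulrAC; lra.
Qed.

End Final.

Unset Implicit Arguments.
Theorem theorem6p1 (R : realType) (E : tvsType R) :
  hausdorff_space E ->
  (forall B : set E, tvs_bounded B ->
     (tame_set B <-> ~ exists x : nat -> E, (forall n, B (x n)) /\ l1_sequence x))
  /\
  (@tame_space R E <-> ~ exists x : nat -> E, l1_sequence x).
Proof.
move=> _; split.
  move=> B hB; split.
    by move=> tB [x [Bx l1]]; exact: (l1_not_tame Bx l1 tB).
  exact: no_l1_tame.
split.
  move=> tS [x l1]; have bx := l1.1.
  apply: (@l1_not_tame R E (range x) x _ l1 (tS _ bx)).
  by move=> n; exists n.
move=> nol1 B hB; apply: no_l1_tame hB _ => -[x [_ l1]]; apply: nol1; by exists x.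
Qed.
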